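(* Let $\Lambda\subset I_N$ and let $k$ be a time level. For every $\phi\in V^k(\Lambda)^d$ and $\psi\in V^k(\Lambda)$, $$(\psi,\nabla_h\cdot\phi)_\Lambda=-(\nabla_h\psi,\phi)_\Lambda,\qquad -(\psi,\Delta_h\psi)_\Lambda=|\psi|_{1,k,\Lambda}^2,$$ where for $i\in\Lambda$: $(\nabla_h\cdot\phi)_i=\sum_{j\in\Lambda}V_j(\phi_j+\phi_i)\cdot\nabla w_h(|x^k_i-x^k_j|)$, $(\nabla_h\psi)_i=\sum_{j\in\Lambda}V_j(\psi_j-\psi_i)\nabla w_h(|x^k_i-x^k_j|)$, and $(\Delta_h\psi)_i=2\sum_{j\in\Lambda\setminus\{i\}}V_j\frac{\psi_i-\psi_j}{|x^k_i-x^k_j|}\frac{x^k_i-x^k_j}{|x^k_i-x^k_j|}\cdot\nabla w_h(|x^k_i-x^k_j|)$.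
   Context: Let $d\in\{2,3\}$. Reference weight function $w\in C^2([0,\infty))$ with some $r_0>0$: $w>0$ on $(0,r_0)$, $w=0$ on $[r_0,\infty)$, $\dot w<0$ on $(0,r_0)$, $\dot w(0)=0$, $\dot w=0$ on $[r_0,\infty)$, $\int_{\mathbb{R}^d}w(|x|)dx=1$. For $h>0$, $w_h(r)=h^{-d}w(r/h)$ with derivative $\dot w_h$; for $x\ne y$, $\nabla w_h(|x-y|)=\dot w_h(|x-y|)\frac{x-y}{|x-y|}$, and $\nabla w_h(0):=0$. $N\in\mathbb{N}$, $I_N=\{1,\dots,N\}$, particle volumes $V_1,\dots,V_N>0$, pairwise distinct particle positions $x^k_1,\dots,x^k_N\in\mathbb{R}^d$ at level $k$. $V^k(\Lambda)$ is the space of real functions on $\{x^k_i\}_{i\in\Lambda}$ (values $\phi_i$), $V^k(\Lambda)^m$ the $\mathbb{R}^m$-valued ones. Discrete inner product $(\phi,\varphi)_\Lambda=\sum_{i\in\Lambda}V_i\,\phi_i\cdot\varphi_i$; discrete semi-norm $|\psi|_{1,k,\Lambda}=\big(\sum_{i\in\Lambda}V_i\sum_{j\in\Lambda\setminus\{i\}}V_j\frac{|\psi_i-\psi_j|^2}{|x^k_i-x^k_j|}|\dot w_h(|x^k_i-x^k_j|)|\big)^{1/2}$. *)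

(* Defs.v *)
From HB Require Import structures.
From mathcomp Require Import all_boot all_order all_algebra.
From mathcomp Require Import all_classical all_reals all_analysis.
Set Implicit Arguments. Unset Strict Implicit. Unset Printing Implicit Defensive.
Import Order.TTheory GRing.Theory Num.Theory numFieldNormedType.Exports.
Local Open Scope classical_set_scope.
Local Open Scope ring_scope.

Section SPH.
Variable R : realType.

Definition vdot (d : nat) (u v : 'rV[R]_d) : R := \sum_(l < d) u 0 l * v 0 l.
Definition vnorm (d : nat) (u : 'rV[R]_d) : R := Num.sqrt (vdot u u).

Definition radial_integral (d : nat) (w : R -> R) : \bar R :=
  match d with
  | 2 => (\int[@lebesgue_measure R]_x1 \int[@lebesgue_measure R]_x2
            (w (Num.sqrt (x1 ^+ 2 + x2 ^+ 2)))%:E)%E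
  | 3 => (\int[@lebesgue_measure R]_x1 \int[@lebesgue_measure R]_x2
            \int[@lebesgue_measure R]_x3
            (w (Num.sqrt (x1 ^+ 2 + x2 ^+ 2 + x3 ^+ 2)))%:E)%E
  | _ => 0%E
  end.

Definition reference_weight (d : nat) (w : R -> R) (r0 : R) : Prop :=
  [/\ 0 < r0,
      [/\ 
      (forall r, 0 <= r -> derivable w r 1 /\ derivable (derive1 w) r 1),
      
      {within [set r : R | 0 <= r], continuous (derive1n 2 w : R -> R)} &
       derive1 w 0 = 0],
      (forall r, 0 < r < r0 -> 0 < w r) /\ (forall r, r0 <= r -> w r = 0),
      (forall r, 0 < r < r0 -> derive1 w r < 0) /\
      (forall r, r0 <= r -> derive1 w r = 0) &
      radial_integral d w = 1%E].

Definition w_h (d : nat) (w : R -> R) (h : R) (r : R) : R := h ^- d * w (r / h).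
Definition dw_h (d : nat) (w : R -> R) (h : R) : R -> R := derive1 (w_h d w h).

(* \nabla w_h(|x - y|), with \nabla w_h(0) := 0 *)
Definition grad_wh (d : nat) (w : R -> R) (h : R) (x y : 'rV[R]_d) : 'rV[R]_d :=
  if x == y then 0
  else dw_h d w h (vnorm (x - y)) *: ((vnorm (x - y))^-1 *: (x - y)).

Variables (N d : nat) (w : R -> R) (h : R) (V : 'I_N -> R)
  (x : 'I_N -> 'rV[R]_d) (Lam : {set 'I_N}).

Definition ip_s (f g : 'I_N -> R) : R := \sum_(i in Lam) V i * (f i * g i).
Definition ip_v (f g : 'I_N -> 'rV[R]_d) : R := \sum_(i in Lam) V i * vdot (f i) (g i).

Definition div_h (phi : 'I_N -> 'rV[R]_d) (i : 'I_N) : R :=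
  \sum_(j in Lam) V j * vdot (phi j + phi i) (grad_wh w h (x i) (x j)).

Definition grad_h (psi : 'I_N -> R) (i : 'I_N) : 'rV[R]_d :=
  \sum_(j in Lam) (V j * (psi j - psi i)) *: grad_wh w h (x i) (x j).

Definition lap_h (psi : 'I_N -> R) (i : 'I_N) : R :=
  2 * \sum_(j in Lam | j != i)
        V j * ((psi i - psi j) / vnorm (x i - x j)) *
        vdot ((vnorm (x i - x j))^-1 *: (x i - x j)) (grad_wh w h (x i) (x j)).

Definition seminorm1 (psi : 'I_N -> R) : R :=
  Num.sqrt (\sum_(i in Lam) V i * \sum_(j in Lam | j != i)
     V j * ((psi i - psi j) ^+ 2 / vnorm (x i - x j)) *
     `|dw_h d w h (vnorm (x i - x j))|).

End SPH.

(* Main.v *)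
Require Import Defs.
From HB Require Import structures.
From mathcomp Require Import all_boot all_order all_algebra.
From mathcomp Require Import all_classical all_reals all_analysis.
From mathcomp Require Import ring lra.
Import Order.TTheory GRing.Theory Num.Theory numFieldNormedType.Exports.
Local Open Scope ring_scope.
Section Aux.
Variable R : realType.
Variable d : nat.
Implicit Types u v z : 'rV[R]_d.

Lemma vdotC u v : vdot u v = vdot v u.
Proof. by apply: eq_bigr => l _; rewrite mulrC. Qed.

Lemma vdotDl u v z : vdot (u + v) z = vdot u z + vdot v z.
Proof. by rewrite /vdot -big_split; apply: eq_bigr => l _; rewrite mxE mulrDl. Qed.

Lemma vdotZl a u v : vdot (a *: u) v = a * vdot u v.
Proof. by rewrite /vdot mulr_sumr; apply: eq_bigr => l _; rewrite mxE mulrA. Qed.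

Lemma vdotZr a u v : vdot u (a *: v) = a * vdot u v.
Proof. by rewrite vdotC vdotZl vdotC. Qed.

Lemma vdotNl u v : vdot (- u) v = - vdot u v.
Proof. by rewrite -scaleN1r vdotZl mulN1r. Qed.

Lemma vdotNr u v : vdot u (- v) = - vdot u v.
Proof. by rewrite vdotC vdotNl vdotC. Qed.

Lemma vdot_suml (I : finType) (A : {set I}) (f : I -> 'rV[R]_d) v :
  vdot (\sum_(j in A) f j) v = \sum_(j in A) vdot (f j) v.
Proof.
rewrite /vdot; under eq_bigr do rewrite summxE big_distrl.
by rewrite exchange_big.
Qed.

Lemma vdot_ge0 u : 0 <= vdot u u.
Proof. by apply: sumr_ge0 => l _; rewrite -expr2 sqr_ge0. Qed.

Lemma vnormN u : vnorm (- u) = vnorm u.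
Proof. by rewrite /vnorm vdotNl vdotNr opprK. Qed.

Lemma vnorm_sq u : vnorm u ^+ 2 = vdot u u.
Proof. by rewrite sqr_sqrtr // vdot_ge0. Qed.

Lemma vnorm_gt0 u : u != 0 -> 0 < vnorm u.
Proof.
move=> nz; rewrite /vnorm sqrtr_gt0 lt_def vdot_ge0 andbT.
apply: contra nz => /eqP H; apply/eqP/rowP => l; rewrite !mxE.
have := psumr_eq0P (fun l _ => (_ : 0 <= u 0 l * u 0 l)) H.
have H2 : forall l, 0 <= u 0 l * u 0 l by move=> l'; rewrite -expr2 sqr_ge0.
move/(_ H2 l isT)/eqP; rewrite mulf_eq0 orbb => /eqP.
done.
Qed.

End Aux.
Lemma antisym_sum0 (R : realType) (N : nat) (Lam : {set 'I_N}) (F : 'I_N -> 'I_N -> R) :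
  (forall i j, F j i = - F i j) ->
  \sum_(i in Lam) \sum_(j in Lam) F i j = 0.
Proof.
move=> H; set S := (X in X = 0).
have : S = - S.
  rewrite {1}/S exchange_big /= -sumrN; apply: eq_bigr => i _.
  rewrite -sumrN; apply: eq_bigr => j _. exact: H.
move=> HS; lra.
Qed.

Lemma grad_antisym (R : realType) d w h (x y : 'rV[R]_d) :
  grad_wh w h y x = - grad_wh w h x y.
Proof.
rewrite /grad_wh eq_sym; case: eqP => _; first by rewrite oppr0.
rewrite -(opprB x y) vnormN !scalerN. done.
Qed.

Lemma part1 (R : realType) (d : nat) (w : R -> R) (h : R) (N : nat)
  (V : 'I_N -> R) (x : 'I_N -> 'rV[R]_d) (Lam : {set 'I_N})
  (phi : 'I_N -> 'rV[R]_d) (psi : 'I_N -> R) :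
  ip_s V Lam psi (div_h w h V x Lam phi)
    = - ip_v V Lam (grad_h w h V x Lam psi) phi.
Proof.
apply/eqP; rewrite -addr_eq0; apply/eqP.
rewrite /ip_s /ip_v -big_split /=.
pose G i j := grad_wh w h (x i) (x j).
rewrite -[in RHS](@antisym_sum0 _ _ Lam (fun i j => V i * V j *
   (psi i * vdot (phi j) (G i j) + psi j * vdot (phi i) (G i j)))); last first.
  move=> i j; rewrite /G (grad_antisym _ _ w h (x i)) !vdotNr; ring.
apply: eq_bigr => i _.
rewrite /div_h /grad_h vdot_suml !mulr_sumr -big_split /=.
apply: eq_bigr => j _.
rewrite vdotDl vdotZl (vdotC _ _ (grad_wh _ _ _ _)) /G; ring.
Qed.

Lemma dw_h_le0 (R : realType) (d : nat) (w : R -> R) (r0 h r : R) :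
  reference_weight d w r0 -> 0 < h -> 0 < r -> dw_h d w h r <= 0.
Proof.
move=> [r0p [der _ _] _ [dneg dz] _] hp rp.
have rh : 0 < r / h by rewrite divr_gt0.
have dw : derivable w (r / h) 1 by case: (der (r/h) (ltW rh)).
have df : derivable (fun r : R => r * h^-1) r 1.
  apply/derivable1_diffP; apply: differentiableM => //.
have dc : derivable (w \o (fun r : R => r * h^-1)) r 1.
  apply/derivable1_diffP; apply: differentiable_comp.
  exact/derivable1_diffP.
  exact/derivable1_diffP.
rewrite /dw_h /w_h.
rewrite (_ : (fun r => h ^- d * w (r / h)) = (fun r => h ^- d * (w \o (fun r : R => r * h^-1)) r)) //.
rewrite derive1Ml // derive1_comp // derive1Mr ?derive1_id; last exact: derivable_id.
rewrite mul1r.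
have : derive1 w (r / h) <= 0.
  case: (ltP (r/h) r0) => H; first by apply/ltW/dneg; rewrite rh H.
  by rewrite dz.
move=> H; rewrite mulr_ge0_le0 //; first by rewrite invr_ge0 exprn_ge0 // ltW.
by rewrite mulr_le0_ge0 // invr_ge0 ltW.
Qed.

Lemma part2 (R : realType) (d : nat) (w : R -> R) (r0 h : R) (N : nat)
  (V : 'I_N -> R) (x : 'I_N -> 'rV[R]_d) (Lam : {set 'I_N})
  (psi : 'I_N -> R) :
  reference_weight d w r0 ->
  0 < h ->
  (forall i, 0 < V i) ->
  injective x ->
  - ip_s V Lam psi (lap_h w h V x Lam psi)
    = (seminorm1 w h V x Lam psi) ^+ 2.
Proof.
move=> rw hp Vp xinj.
pose n i j := vnorm (x i - x j).
pose c i j := dw_h d w h (n i j) / n i j.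
have csym i j : c j i = c i j by rewrite /c /n -(opprB (x i)) vnormN.
have npos i j : j != i -> 0 < n i j.
  move=> ji; apply: vnorm_gt0; rewrite subr_eq0.
  by rewrite (inj_eq xinj) eq_sym.
have lapE i : lap_h w h V x Lam psi i = 2 * \sum_(j in Lam) V j * (psi i - psi j) * c i j.
  rewrite /lap_h big_mkcondr /=; congr (_ * _); apply: eq_bigr => j _.
  case: ifP => [ji|/negbT]; last by rewrite negbK => /eqP ->; rewrite subrr mulr0 mul0r.
  have np := npos i j ji.
  have ij : (i == j) = false by rewrite eq_sym; exact: negbTE.
  rewrite /grad_wh (inj_eq xinj) ij /= vdotZr vdotZl vdotZr -vnorm_sq.
  move: np; rewrite /c /n; set a := vnorm _; set b := dw_h _ _ _ _ => np.
  field; exact: lt0r_neq0.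
have snE : seminorm1 w h V x Lam psi ^+ 2 =
    \sum_(i in Lam) V i * \sum_(j in Lam) V j * (psi i - psi j) ^+ 2 * - c i j.
  rewrite sqr_sqrtr; last first.
    apply: sumr_ge0 => i _; apply: mulr_ge0; first exact: ltW.
    apply: sumr_ge0 => j _; apply: mulr_ge0 => //; apply: mulr_ge0; first exact: ltW.
    by apply: mulr_ge0; [exact: sqr_ge0 | rewrite invr_ge0 sqrtr_ge0].
  apply: eq_bigr => i _; congr (_ * _).
  rewrite big_mkcondr /=; apply: eq_bigr => j _.
  case: ifP => [ji|/negbT]; last by rewrite negbK => /eqP ->; rewrite subrr expr0n /= mulr0 mul0r.
  have np := npos i j ji.
  rewrite ler0_norm; last exact: (dw_h_le0 _ _ _ _ _ _ rw hp np).
  move: np; rewrite /c /n; set a := vnorm _; set b := dw_h _ _ _ _ => np.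
  field; exact: lt0r_neq0.
clearbody c n.
rewrite snE /ip_s; apply/eqP; rewrite eq_sym -addr_eq0 -big_split /=; apply/eqP.
rewrite -[in RHS](@antisym_sum0 _ _ Lam (fun i j => V i * V j * c i j * (psi i ^+ 2 - psi j ^+ 2))); last first.
  by move=> i j; rewrite csym; ring.
apply: eq_bigr => i _; rewrite lapE mulr_sumr.
rewrite !mulr_sumr -big_split /=; apply: eq_bigr => j _; ring.
Qed.

Theorem lemma3 (R : realType) (d : nat) (w : R -> R) (r0 h : R) (N : nat)
  (V : 'I_N -> R) (X : nat -> 'I_N -> 'rV[R]_d) (k : nat) (Lam : {set 'I_N})
  (phi : 'I_N -> 'rV[R]_d) (psi : 'I_N -> R) :
  (d = 2 \/ d = 3)%N ->
  reference_weight d w r0 ->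
  0 < h ->
  (forall i, 0 < V i) ->
  injective (X k) ->
  ip_s V Lam psi (div_h w h V (X k) Lam phi)
    = - ip_v V Lam (grad_h w h V (X k) Lam psi) phi
  /\ - ip_s V Lam psi (lap_h w h V (X k) Lam psi)
    = (seminorm1 w h V (X k) Lam psi) ^+ 2.
Proof.
move=> _ rw hp Vp xinj; split; first exact: part1.
exact: (part2 _ _ _ _ _ _ _ _ _ _ rw hp Vp xinj).
Qed.
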